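(* Every point $(d_1,d_3)\in S_{13}$ satisfies $d_1\le 3d_3+3/8$.
   Context: For a finite graph $G$ and a $k$-vertex graph $H$, $d(H,G)$ is the probability that a uniformly random $k$-element subset of $V(G)$ induces a subgraph isomorphic to $H$. For $k\in\{0,1,2,3\}$ let $H_k$ be the 3-vertex graph with exactly $k$ edges. Let $S\subseteq\mathbb{R}^4$ be the set of all $(d_0,d_1,d_2,d_3)$ such that for every $\varepsilon>0$ and every $n\in\mathbb{N}$ there is a graph $G$ with at least $n$ vertices satisfying $|d(H_k,G)-d_k|\le\varepsilon$ for $k=0,1,2,3$. For $i<j$, $S_{ij}=\{(d_i,d_j):(d_0,d_1,d_2,d_3)\in S\}$. *)

(* Defs.v *)
From mathcomp Require Import all_boot.
From Stdlib Require Import Reals.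
Set Implicit Arguments. Unset Strict Implicit.

Definition simple_graph (n : nat) (e : rel 'I_n) : Prop :=
  symmetric e /\ irreflexive e.

(* Number of ORDERED pairs (x,y) with x,y in A and xy an edge
   (= twice the number of edges of the subgraph induced on A). *)
Definition ord_edge_pairs (n : nat) (e : rel 'I_n) (A : {set 'I_n}) : nat :=
  #|[set p : 'I_n * 'I_n | (p.1 \in A) && (p.2 \in A) && e p.1 p.2]|.

(* Number of 3-element vertex subsets inducing a graph with exactly k edges,
   i.e. inducing a copy of H_k. *)
Definition ind3_count (n : nat) (e : rel 'I_n) (k : nat) : nat :=
  #|[set A : {set 'I_n} | (#|A| == 3) && (ord_edge_pairs e A == (2 * k)%N)]|.

Definition dens3 (n : nat) (e : rel 'I_n) (k : nat) : R :=
  (INR (ind3_count e k) / INR 'C(n, 3))%R.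

Definition inS (d0 d1 d2 d3 : R) : Prop :=
  forall eps : R, (0 < eps)%R -> forall N : nat,
    exists (n : nat) (e : rel 'I_n),
      (N <= n)%N /\ simple_graph e /\
      (Rabs (dens3 e 0 - d0) <= eps)%R /\
      (Rabs (dens3 e 1 - d1) <= eps)%R /\
      (Rabs (dens3 e 2 - d2) <= eps)%R /\
      (Rabs (dens3 e 3 - d3) <= eps)%R.

Definition inS13 (d1 d3 : R) : Prop := exists d0 d2 : R, inS d0 d1 d2 d3.

(* Main.v *)
Require Import Defs.
From Stdlib Require Import Reals Lra Psatz.
From mathcomp Require Import all_boot.
From mathcomp Require Import zify.
Set Implicit Arguments. Unset Strict Implicit.

Lemma binC n : ('C(n, 3) * 6 = n * (n - 1) * (n - 2))%N.
Proof.
rewrite -[6%N]/(3`!) bin_ffact !ffactnS ffactn0.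
case: n => [|[|[|n]]] //=; lia.
Qed.

Open Scope R_scope.

Lemma real_part (a b n : nat) : (4 <= n)%nat ->
  (16 * a <= 48 * b + n * (n * n))%nat ->
  INR a / INR 'C(n, 3) <= 3 * (INR b / INR 'C(n, 3)) + 3 / 8 + 3 / INR n.
Proof.
move=> Hn H.
have [m Em] : exists m, n = (m + 4)%nat by exists (n - 4)%nat; lia.
have HC : INR 'C(n, 3) * 6 = INR n * (INR n - 1) * (INR n - 2).
  have := f_equal INR (binC n).
  rewrite -!multE -!minusE !mult_INR !minus_INR; try (apply/leP; lia).
  by have -> : INR 6 = 6 by simpl; lra.
have HM : INR n = INR m + 4 by rewrite Em plus_INR; simpl; lra.
have Hm : 0 <= INR m := pos_INR m.
have HR : 16 * INR a <= 48 * INR b + INR n * (INR n * INR n).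
  have := le_INR _ _ (elimT leP H).
  rewrite -!multE -!plusE plus_INR !mult_INR.
  have -> : INR 16 = 16 by simpl; lra.
  by have -> : INR 48 = 48 by simpl; lra.
set M := INR n in HC HM HR *.
set c := INR 'C(n, 3) in HC *.
have Hc : 0 < c by nra.
have HM0 : 0 < M by lra.
have P1 : M * (16 * INR a) <= M * (48 * INR b + M * (M * M)).
  by apply: Rmult_le_compat_l; lra.
have P2 : M * (M * (M * M)) <= M * ((M + 8) * (M - 1) * (M - 2)).
  apply: Rmult_le_compat_l; first lra.
  have : 0 <= (M - 4) * (5 * M - 2) by apply: Rmult_le_pos; lra.
  lra.
have -> : INR a / c = (16 * M * INR a) / (16 * M * c) by field; lra.
have -> : 3 * (INR b / c) + 3 / 8 + 3 / M =
   (48 * M * INR b + (M + 8) * (c * 6)) / (16 * M * c) by field; lra.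
apply: Rmult_le_compat_r.
  by apply: Rlt_le; apply: Rinv_0_lt_compat; nra.
rewrite HC; lra.
Qed.

Lemma final_real (d1 d3 : R) :
  (forall eps : R, 0 < eps -> forall N : nat, exists x1 x3 m : R,
     INR N <= m /\ 0 < m /\ x1 <= 3 * x3 + 3 / 8 + 3 / m /\
     Rabs (x1 - d1) <= eps /\ Rabs (x3 - d3) <= eps) ->
  d1 <= 3 * d3 + 3 / 8.
Proof.
move=> H.
apply: Rnot_lt_le => Hlt.
set dl := d1 - (3 * d3 + 3 / 8).
have Edl : dl = d1 - (3 * d3 + 3 / 8) by [].
clearbody dl.
have Hd : 0 < dl by lra.
have [N HN] := INR_unbounded (12 / dl).
have [x1 [x3 [m [Hm [Hm0 [Hb [H1 H3]]]]]]] := H (dl / 16) ltac:(lra) N.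
have Hv : 12 / dl * dl = 12 by field; lra.
have Hu : 3 / m * m = 3 by field; lra.
have Hum : 3 / m < dl / 4.
  move: Hu Hv HN; set u := 3 / m; set v := 12 / dl => Hu Hv HN.
  nra.
move: H1 H3; rewrite /Rabs; case: (Rcase_abs _) => ?; case: (Rcase_abs _) => ? ? ?; lra.
Qed.
Close Scope R_scope.

Section Trip.
Variable T : finType.

Lemma cards3P (A : {set T}) : #|A| = 3 ->
  exists a b c, [/\ a != b, a != c, b != c & A = [set a; b; c]].
Proof.
move=> HA.
have : 0 < #|A| by rewrite HA.
case/card_gt0P=> a aA.
have : #|A :\ a| == 2 by move: (cardsD1 a A); rewrite aA HA add1n => -[<-].
case/cards2P=> b [c [bc Hbc]].
have bA : b \in A :\ a by rewrite Hbc !inE eqxx.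
have cA : c \in A :\ a by rewrite Hbc !inE eqxx orbT.
move: bA cA; rewrite !inE => /andP[ba _] /andP[ca _].
exists a, b, c; split; [by rewrite eq_sym ba | by rewrite eq_sym ca | by [] | ].
rewrite -(setD1K aA) Hbc; apply/setP=> q; rewrite !inE; by case: (q == a); case: (q == b).
Qed.

Definition dist3 (t : T * T * T) := [&& t.1.1 != t.1.2, t.1.1 != t.2 & t.1.2 != t.2].
Definition S3 (t : T * T * T) : {set T} := [set t.1.1; t.1.2; t.2].

Lemma fiber6 a b c : a != b -> a != c -> b != c ->
  #|[pred t | dist3 t && (S3 t == [set a; b; c])]| = 6.
Proof.
move=> ab ac bc.
set s := [:: (a,b,c); (a,c,b); (b,a,c); (b,c,a); (c,a,b); (c,b,a)].
have us : uniq s.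
  rewrite /s /= !inE !xpair_eqE !eqxx /= !andbT.
  by rewrite ![b == a]eq_sym ![c == a]eq_sym ![c == b]eq_sym (negbTE ab) (negbTE ac) (negbTE bc).
rewrite -[6]/(size s) -(card_uniqP us); apply: eq_card => -[[x y] z].
rewrite !inE /dist3 /S3 /=.
apply/andP/idP.
  case=> /and3P[xy xz yz] /eqP/setP Hs.
  have := Hs x; have := Hs y; have := Hs z; rewrite !inE !eqxx !orbT /= -!orbA.
move=> /esym Hz /esym Hy /esym Hx.
  case/or3P: Hx => /eqP Ex; case/or3P: Hy => /eqP Ey; case/or3P: Hz => /eqP Ez; subst x y z;
  first [ by move: xy; rewrite eqxx | by move: xz; rewrite eqxx | by move: yz; rewrite eqxx
        | by rewrite !xpair_eqE !eqxx ?orbT ].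
have E1 : forall u v w : T, [set u; v; w] = [set u; w; v].
  by move=> u v w; apply/setP=> q; rewrite !inE; by case: (q == u); case: (q == v); case: (q == w).
have E2 : forall u v w : T, [set u; v; w] = [set v; u; w].
  by move=> u v w; apply/setP=> q; rewrite !inE; by case: (q == u); case: (q == v); case: (q == w).
rewrite !xpair_eqE -!andbA.
case/or4P=> [|||/or3P[||]] /and3P[/eqP-> /eqP-> /eqP->]; (split;
  [ by rewrite ?(eq_sym b a) ?(eq_sym c a) ?(eq_sym c b) ab ac bc
  | apply/eqP/setP=> q; rewrite !inE; by case: (q==a); case: (q==b); case: (q==c) ]).
Qed.

Lemma card_S3 t : dist3 t -> #|S3 t| = 3.
Proof.
case: t => [[x y] z] /and3P[/= xy xz yz].
rewrite /S3 /= setUC cardsU1 cards2 xy !inE negb_or (eq_sym z x) (eq_sym z y) xz yz.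
by [].
Qed.

Lemma sum_trip (F : {set T} -> nat) :
  \sum_(t | dist3 t) F (S3 t) = 6 * \sum_(A : {set T} | #|A| == 3) F A.
Proof.
rewrite (partition_big S3 (fun A : {set T} => #|A| == 3)); last first.
  by move=> t /card_S3 ->.
rewrite big_distrr /=; apply: eq_bigr => A /eqP HA.
rewrite (eq_bigr (fun _ => F A)); last by move=> t /andP[_ /eqP ->].
rewrite sum_nat_const.
have [a [b [c [ab ac bc EA]]]] := cards3P HA.
have := fiber6 ab ac bc; rewrite -EA mulnC => <-.
rewrite mulnC; congr (_ * _); by apply: eq_card => t.
Qed.
End Trip.

Section G1.
Variable n : nat.
Variable e : rel 'I_n.
Hypothesis Hs : symmetric e.
Hypothesis Hi : irreflexive e.
Local Notation T := 'I_n.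

Lemma sum3 (f : T -> nat) x y z : dist3 ((x, y), z) ->
  \sum_(i in [set x; y; z]) f i = f x + f y + f z.
Proof.
case/and3P=> /= xy xz yz.
have -> : [set x; y; z] = x |: (y |: [set z]).
  by apply/setP=> q; rewrite !inE orbA.
rewrite big_setU1; last by rewrite !inE negb_or xy xz.
rewrite big_setU1; last by rewrite !inE yz.
by rewrite big_set1 /= addnA.
Qed.

Lemma oep3 x y z : dist3 ((x, y), z) ->
  ord_edge_pairs e [set x; y; z] = 2 * (e x y + e x z + e y z).
Proof.
move=> D.
set A := [set x; y; z].
rewrite /ord_edge_pairs cardsE -sum1_card big_mkcond /=.
transitivity (\sum_(p : T * T) (fun i j => if i \in A then (if j \in A then (e i j : nat) else 0) else 0) p.1 p.2).
  apply: eq_bigr => -[i j] _ /=; rewrite unfold_in /=.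
  by case: (i \in A); case: (j \in A); case: (e i j).
rewrite -(pair_bigA _ (fun i j => if i \in A then (if j \in A then (e i j : nat) else 0) else 0)) /=.
transitivity (\sum_(i in A) \sum_(j in A) (e i j : nat)).
  rewrite [RHS]big_mkcond /=; apply: eq_bigr => i _.
  case: (i \in A); last by rewrite big1.
  by rewrite [RHS]big_mkcond.
rewrite /A.
rewrite sum3 // !sum3 //.
rewrite !Hi (Hs y x) (Hs z x) (Hs z y).
lia.
Qed.

Lemma six_ind k : 6 * ind3_count e k =
  \sum_(t | dist3 t) (e t.1.1 t.1.2 + e t.1.1 t.2 + e t.1.2 t.2 == k : nat).
Proof.
transitivity (6 * \sum_(A : {set T} | #|A| == 3) (ord_edge_pairs e A == 2 * k : nat)).
  congr (_ * _); rewrite /ind3_count cardsE -sum1_card big_mkcond [RHS]big_mkcond.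
  apply: eq_bigr => A _; rewrite unfold_in /=.
  by case: (#|A| == 3); case: (_ == _).
rewrite -sum_trip; apply: eq_bigr => -[[x y] z] D.
by rewrite /S3 /= oep3 // eqn_pmul2l.
Qed.
End G1.

From mathcomp Require Import all_order all_algebra.
From mathcomp Require Import ring lra.
Import Order.TTheory GRing.Theory Num.Theory.
Local Open Scope ring_scope.
Section Lin.
Variable n : nat.
Local Notation T := 'I_n.

Definition bz (b : bool) : int := if b then 1 else 0.

Lemma bzK b : bz b * bz b = bz b. Proof. by case: b. Qed.

Lemma sum_lin (a c : int) (f : T -> int) :
  \sum_(y : T) (a * f y + c) = a * \sum_y f y + c * n%:Z.
Proof.
rewrite big_split /= -mulr_sumr sumr_const card_ord.
by rewrite -mulr_natr natz.
Qed.

Lemma sum_pred1 (c : int) x : \sum_(z : T) (if z == x then c else 0) = c.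
Proof. by rewrite -big_mkcond big_pred1_eq. Qed.

Lemma exc1 (G : T -> int) x :
  \sum_y (if x != y then G y else 0) = \sum_y G y - G x.
Proof.
rewrite -(sum_pred1 (G x) x) -sumrB; apply: eq_bigr => y _.
by rewrite eq_sym; case: eqP => [->|]; rewrite ?subrr ?subr0.
Qed.

Lemma exc2 (G : T -> int) x y : x != y ->
  \sum_z (if (x != z) && (y != z) then G z else 0) = \sum_z G z - G x - G y.
Proof.
move=> xy.
rewrite -(sum_pred1 (G x) x) -(sum_pred1 (G y) y) -!sumrB; apply: eq_bigr => z _.
rewrite (eq_sym x) (eq_sym y).
case: (eqVneq z x) => [->|zx]; first by rewrite (negbTE xy) /=; ring.
case: (eqVneq z y) => [->|zy] /=; first by ring.
by ring.
Qed.

Lemma sum_if (a : bool) (F : T -> int) :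
  \sum_z (if a then F z else 0) = if a then \sum_z F z else 0.
Proof. by case: a => //; rewrite big1. Qed.
End Lin.

Section G2.
Variable n : nat.
Variable e : rel 'I_n.
Hypothesis Hs : symmetric e.
Hypothesis Hi : irreflexive e.
Local Notation T := 'I_n.

Definition deg (x : T) : int := \sum_y bz (e x y).
Definition hh (x y z : T) : int := bz (e x y) + bz (e x z) - 4 * bz (e x y) * bz (e x z).

Lemma hG x y : \sum_z hh x y z - hh x y x - hh x y y =
   (n%:Z + 1 - 4 * deg x) * bz (e x y) + deg x.
Proof.
rewrite (eq_bigr (fun z => (1 - 4 * bz (e x y)) * bz (e x z) + bz (e x y))); last first.
  by move=> z _; rewrite /hh; ring.
rewrite sum_lin /hh Hi /= -/(deg x).
have := bzK (e x y); move: (bz (e x y)) => b Hb.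
rewrite -[4 * b * b]mulrA Hb; ring.
Qed.

Lemma hsum x : \sum_y \sum_z (if dist3 ((x, y), z) then hh x y z else 0) =
   2 * n%:Z * deg x - 4 * deg x * deg x.
Proof.
transitivity (\sum_y (if x != y then \sum_z hh x y z - hh x y x - hh x y y else 0)).
  apply: eq_bigr => y _; rewrite /dist3 /=.
  case: (eqVneq x y) => [<-|xy] /=; first by rewrite big1.
  by rewrite exc2.
rewrite exc1 (eq_bigr _ (fun y _ => hG x y)) hG Hi /= mulr0 add0r.
rewrite sum_lin -/(deg x); ring.
Qed.

Lemma hbound x : 4 * (2 * n%:Z * deg x - 4 * deg x * deg x) <= n%:Z * n%:Z.
Proof.
rewrite -subr_ge0.
have -> : n%:Z * n%:Z - 4 * (2 * n%:Z * deg x - 4 * deg x * deg x) = (n%:Z - 4 * deg x) ^+ 2.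
  by rewrite expr2; ring.
exact: sqr_ge0.
Qed.

Definition h1 (t : T * T * T) := hh t.1.1 t.1.2 t.2.
Definition h2 (t : T * T * T) := hh t.1.2 t.1.1 t.2.
Definition h3 (t : T * T * T) := hh t.2 t.1.1 t.1.2.

Lemma tot1 : 4 * \sum_(t | dist3 t) h1 t <= n%:Z * (n%:Z * n%:Z).
Proof.
set G := fun t : T * T * T => if dist3 t then h1 t else 0.
have -> : \sum_(t | dist3 t) h1 t = \sum_t G t by rewrite big_mkcond.
have -> : \sum_t G t = \sum_(p : T * T) \sum_z G (p, z).
  by rewrite (pair_bigA _ (fun p z => G (p, z))); apply: eq_bigr => -[p z].
have -> : \sum_(p : T * T) \sum_z G (p, z) = \sum_x \sum_y \sum_z G ((x, y), z).
  by rewrite (pair_bigA _ (fun x y => \sum_z G ((x, y), z))); apply: eq_bigr => -[x y].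
rewrite (eq_bigr _ (fun x _ => hsum x)) mulr_sumr.
apply: le_trans (ler_sum _ (fun x _ => hbound x)) _.
by rewrite sumr_const card_ord -mulr_natr natz mulrC.
Qed.

Lemma tot2 : \sum_(t | dist3 t) h2 t = \sum_(t | dist3 t) h1 t.
Proof.
rewrite (reindex_inj (h := fun t : T * T * T => ((t.1.2, t.1.1), t.2))) /=; last first.
  by move=> [[a b] c] [[a' b'] c'] /= [-> -> ->].
apply: eq_big => [[[x y] z]|[[x y] z] _]; rewrite /dist3 /h1 /h2 //=.
by rewrite (eq_sym y x); case: (x != y); case: (x != z); case: (y != z).
Qed.

Lemma tot3 : \sum_(t | dist3 t) h3 t = \sum_(t | dist3 t) h1 t.
Proof.
rewrite [RHS](reindex_inj (h := fun t : T * T * T => ((t.2, t.1.1), t.1.2))) /=; last first.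
  by move=> [[a b] c] [[a' b'] c'] /= [-> -> ->].
apply: eq_big => [[[x y] z]|[[x y] z] _]; rewrite /dist3 /h1 /h3 //=.
by rewrite (eq_sym z x) (eq_sym z y); case: (x != y); case: (x != z); case: (y != z).
Qed.

Lemma pointwise (t : T * T * T) :
  2 * ((e t.1.1 t.1.2 + e t.1.1 t.2 + e t.1.2 t.2 == 1)%N : nat)%:R
  - 6 * ((e t.1.1 t.1.2 + e t.1.1 t.2 + e t.1.2 t.2 == 3)%N : nat)%:R
  = h1 t + h2 t + h3 t :> int.
Proof.
case: t => [[x y] z]; rewrite /h1 /h2 /h3 /hh /= (Hs y x) (Hs z x) (Hs z y).
by case: (e x y); case: (e x z); case: (e y z).
Qed.

Lemma key : (16 * ind3_count e 1 <= 48 * ind3_count e 3 + n * (n * n))%N.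
Proof.
have E k : ((6 * ind3_count e k)%N%:R : int) =
    \sum_(t | dist3 t) ((e t.1.1 t.1.2 + e t.1.1 t.2 + e t.1.2 t.2 == k)%N : nat)%:R.
  by rewrite six_ind // natr_sum.
have H : 2 * ((6 * ind3_count e 1)%N%:R : int) - 6 * (6 * ind3_count e 3)%N%:R
   = \sum_(t | dist3 t) h1 t + \sum_(t | dist3 t) h2 t + \sum_(t | dist3 t) h3 t.
  rewrite !E !mulr_sumr -sumrB -!big_split /=.
  by apply: eq_bigr => t _; rewrite pointwise.
have B : 4 * (2 * ((6 * ind3_count e 1)%N%:R : int) - 6 * (6 * ind3_count e 3)%N%:R)
   <= 3 * (n%:Z * (n%:Z * n%:Z)).
  rewrite H tot2 tot3; have := tot1; lra.
move: B; rewrite !natz.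
lia.
Qed.
End G2.

Close Scope ring_scope.
Delimit Scope R_scope with R.

Theorem lemma6 (d1 d3 : R) : inS13 d1 d3 -> (d1 <= 3 * d3 + 3 / 8)%R.
Proof.
move=> [d0 [d2 H]].
apply: final_real => eps Heps N.
have [n [e [Hn [[Hs Hi] [_ [H1 [_ H3]]]]]]] := H eps Heps (N + 4)%nat.
exists (dens3 e 1), (dens3 e 3), (INR n).
split; first by apply: le_INR; lia.
split; first by apply: lt_0_INR; lia.
split; last by split.
apply: real_part; first lia.
exact: key.
Qed.
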